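(* Let $h,u,q$ be positive integers with $h\equiv 2$ or $4\pmod 6$, $u\equiv 0\pmod 3$, $u\ge 6$, and $q$ not divisible by $3$. Suppose there exists a $(u+1)$-GDD of type $q^{u+1}$. Call a positive integer $d$ admissible if $d\equiv h\pmod 3$ and $d\le h(u-1)/2$, and suppose that for every admissible $d$ there exists a 4-GDD of type $h^u d^1$; let $d_{\min}$ be the smallest admissible $d$. Then there exists a 4-GDD of type $(hq)^u m^1$ for every integer $m\equiv hq\pmod 3$ with $q\,d_{\min}\le m\le qh(u-1)/2$.
   Context: For a set $K$ of positive integers, a $K$-GDD (group divisible design) is a triple $(V,\mathcal G,\mathcal B)$ where $V$ is a finite set, $\mathcal G$ is a partition of $V$ into subsets called groups, $\mathcal B$ is a nonempty collection of subsets of $V$ (blocks) with sizes in $K$, such that every pair of points from distinct groups lies in exactly one block and no pair of points from the same group lies in any block. A $k$-GDD means a $\{k\}$-GDD. The type $g_1^{u_1}\cdots g_r^{u_r}$ means exactly $u_i$ groups of size $g_i$ for each $i$; type $h^u d^1$ means $u$ groups of size $h$ and one group of size $d$. *)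

(* Defs.v *)
From mathcomp Require Import all_boot.
Set Implicit Arguments. Unset Strict Implicit. Unset Printing Implicit Defensive.

Definition is_GDD (n : nat) (K : pred nat) (G : {set {set 'I_n}})
    (B : seq {set 'I_n}) : Prop :=
  [/\ partition G [set: 'I_n],
      B != [::],
      all (fun b : {set 'I_n} => #|b| \in K) B &
      forall x y : 'I_n, x != y ->
        count (fun b : {set 'I_n} => (x \in b) && (y \in b)) B
          = (pblock G x != pblock G y) :> nat ].

Definition GDD_exists (K : pred nat) (ty : seq nat) : Prop :=
  exists (n : nat) (G : {set {set 'I_n}}) (B : seq {set 'I_n}),
    is_GDD K G B /\ perm_eq [seq #|A| | A : {set 'I_n} <- enum G] ty.

Definition admissible (h u d : nat) : bool :=
  [&& 0 < d, d == h %[mod 3] & 2 * d <= h * (u - 1)].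

(* Main.v *)
Require Import Defs.
From mathcomp Require Import all_boot.
From mathcomp Require Import zify.
From Stdlib Require Import IndefiniteDescription.
Set Implicit Arguments. Unset Strict Implicit. Unset Printing Implicit Defensive.

Lemma perm_map_ex (T : eqType) (f : T -> nat) (l : seq T) (s : seq nat) :
  perm_eq (map f l) s -> exists2 l', perm_eq l l' & map f l' = s.
Proof.
elim: s l => [|a s IH] l H.
  exists l => //; move/perm_size: H; rewrite size_map; by case: l.
have : a \in map f l by rewrite (perm_mem H) mem_head.
case/mapP=> x xl ax.
have Hl := perm_to_rem xl.
have H2 : perm_eq (map f (rem x l)) s.
  rewrite -(perm_cons a); apply: perm_trans H.
  rewrite perm_sym ax -/(map f (x :: rem x l)). exact: perm_map.
have [l'' Hp Hm] := IH _ H2.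
exists (x :: l''); last by rewrite /= Hm ax.
by apply: perm_trans Hl _; rewrite perm_cons.
Qed.

Lemma card_sigT (X : finType) (w : X -> nat) (pr : pred X) :
  #|[set p : {x : X & 'I_(w x)} | pr (tag p)]| = \sum_(x | pr x) w x.
Proof.
rewrite -sum1_card (partition_big (@tag X (fun x => 'I_(w x))) pr); last first.
  by move=> p; rewrite inE.
apply: eq_bigr => x px.
rewrite sum1dep_card.
have -> : [set p | (p \in [set p0 | pr (tag p0)]) && (tag p == x)] =
   [set Tagged (fun x => 'I_(w x)) j | j : 'I_(w x)].
  apply/setP => p; rewrite !inE.
  case: p => x' j /=; apply/idP/idP.
    case/andP=> _ /eqP Ex; subst x'. by apply/imsetP; exists j.
  case/imsetP=> j' _ E; have /= Ex := congr1 tag E; by rewrite Ex px eqxx.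
rewrite card_imset ?card_ord //.
move=> j1 j2 E.
have := tagged_asE (u := Tagged (fun x => 'I_(w x)) j1) j2.
by rewrite -E tagged_asE.
Qed.


Definition gddS (P : finType) (K : pred nat) (S : {set P}) k (g : P -> 'I_k)
   (B : seq {set P}) : Prop :=
  [/\ B != [::], all (fun b : {set P} => (#|b| \in K) && (b \subset S)) B &
   forall p p', p \in S -> p' \in S -> p != p' ->
     count (fun b : {set P} => (p \in b) && (p' \in b)) B = (g p != g p')].

Definition fibs (P : finType) (S : {set P}) k (g : P -> 'I_k) :=
  [seq #|[set p in S | g p == i]| | i <- enum 'I_k].

Lemma card_fibs (P : finType) (S : {set P}) k (g : P -> 'I_k) :
  sumn (fibs S g) = #|S|.
Proof.
rewrite /fibs sumnE big_map big_enum /=.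
rewrite -sum1_card (partition_big g predT) //=.
apply: eq_bigr => i _; rewrite -sum1dep_card; apply: eq_bigl => p.
by [].
Qed.

Lemma relabel (K : pred nat) ty : ~~ K 0 -> GDD_exists K ty ->
  forall (P : finType) (S : {set P}) k (g : P -> 'I_k),
  perm_eq (fibs S g) ty -> exists B, gddS K S g B.
Proof.
move=> K0 [n [G [B0 [[HP HB0 HK Hc] Hty]]]] P S k g Hf.
set L1 := enum G.
set s1 := [seq #|A| | A : {set 'I_n} <- L1] in Hty.
set cf := fun i : 'I_k => #|[set p in S | g p == i]|.
have Hf2 : perm_eq (map cf (enum 'I_k)) s1 by apply: perm_trans Hf _; rewrite perm_sym.
have [labs Hlabs Hml] := perm_map_ex Hf2.
set F1 := flatten (map (fun A : {set 'I_n} => enum A) L1).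
set F2 := flatten (map (fun i => enum [set p in S | g p == i]) labs).
have sh1 : shape (map (fun A : {set 'I_n} => enum A) L1) = s1.
  by rewrite /shape -map_comp; apply: eq_map => A /=; rewrite -cardE.
have sh2 : shape (map (fun i => enum [set p in S | g p == i]) labs) = s1.
  by rewrite -Hml /shape -map_comp; apply: eq_map => i /=; rewrite -cardE.
have sz1 : size F1 = sumn s1 by rewrite size_flatten sh1.
have sz2 : size F2 = sumn s1 by rewrite size_flatten sh2.
have cov : cover G = [set: 'I_n] by apply: cover_partition.
have trivG : trivIset G by case/and3P: HP.
have inF1 : forall x, x \in F1.
  move=> x; apply/flattenP; exists (enum (pblock G x)).
    apply/mapP; exists (pblock G x) => //; rewrite /L1 mem_enum.
    by apply: pblock_mem; rewrite cov inE.
  by rewrite mem_enum mem_pblock cov inE.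
have inF2 : forall p, (p \in F2) = (p \in S).
  move=> p; apply/flattenP/idP.
    by case=> s /mapP [i _ ->]; rewrite mem_enum inE => /andP [].
  move=> pS; exists (enum [set p0 in S | g p0 == g p]).
    by apply/mapP; exists (g p) => //; rewrite -(perm_mem Hlabs) mem_enum.
  by rewrite mem_enum inE pS eqxx.
have sumS : sumn s1 = #|S|.
  by rewrite -Hml -(card_fibs S g); apply: perm_sumn; apply: perm_map; rewrite perm_sym.
have sumn1 : sumn s1 = n.
  rewrite /s1 sumnE big_map /L1 big_enum /= -(card_partition HP) cardsT card_ord.
  done.
have uF1 : uniq F1.
  apply: (leq_size_uniq (enum_uniq 'I_n)) => [x _|]; first exact: inF1.
  by rewrite sz1 sumn1 size_enum_ord.
have uF2 : uniq F2.
  apply: (leq_size_uniq (enum_uniq (mem S))) => [x|].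
    by rewrite mem_enum inF2.
  by rewrite sz2 sumS cardE.
have ulabs : uniq labs by rewrite -(perm_uniq Hlabs) enum_uniq.
have [x1 _] : exists x1 : 'I_n, true.
  move: HB0 HK; case: (B0) => [//|b B0' _] /= /andP [Kb _].
  have : b != set0 by apply/eqP => E; move: Kb; rewrite E cards0; apply/negP.
  by case/set0Pn => x _; exists x.
have [p0 _] : exists p0 : P, true.
  have : 0 < size F2 by rewrite sz2 -sz1; case: (F1) (inF1 x1).
  by case: (F2) => [//|p0 _] _; exists p0.
set phi := fun x : 'I_n => nth p0 F2 (index x F1).
have ixlt : forall x, index x F1 < sumn s1 by move=> x; rewrite -sz1 index_mem.
have phiS : forall x, phi x \in S.
  by move=> x; rewrite -inF2 /phi mem_nth // sz2.
have phi_inj : injective phi.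
  move=> x y /eqP; rewrite /phi nth_uniq ?sz2 // => /eqP E.
  by rewrite -(nth_index x (inF1 x)) E nth_index.
have phi_sur : forall p, p \in S -> exists x, phi x = p.
  move=> p pS; rewrite -inF2 in pS.
  have lt : index p F2 < size F1 by rewrite sz1 -sz2 index_mem.
  exists (nth x1 F1 (index p F2)).
  by rewrite /phi index_uniq // nth_index.
set r := fun x : 'I_n => reshape_index s1 (index x F1).
have rlt : forall x, r x < size s1 by move=> x; apply: reshape_indexP.
have olt : forall x, reshape_offset s1 (index x F1) < nth 0 s1 (r x).
  by move=> x; apply: reshape_offsetP.
have sL1 : size L1 = size s1 by rewrite size_map.
have slabs : size labs = size s1 by rewrite -Hml size_map.
have pbl : forall x, pblock G x = nth set0 L1 (r x).
  move=> x; apply: def_pblock => //; first by rewrite -mem_enum mem_nth // sL1.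
  have := nth_flatten x (map (fun A : {set 'I_n} => enum A) L1) (index x F1).
  rewrite -/F1 nth_index ?inF1 // sh1 -/(r x) => E.
  rewrite {1}E (nth_map set0) ?sL1 // -mem_enum mem_nth // -cardE.
  by have := olt x; rewrite /s1 (nth_map set0) ?sL1.
have gphi : forall x, g (phi x) = nth (g p0) labs (r x).
  move=> x; have := nth_flatten p0 (map (fun i => enum [set p in S | g p == i]) labs) (index x F1).
  rewrite -/F2 -/(phi x) sh2 -/(r x) => ->.
  rewrite (nth_map (g p0)) ?slabs //.
  set A := [set _ in _ | _].
  have : nth p0 (enum A) (reshape_offset s1 (index x F1)) \in A.
    rewrite -mem_enum mem_nth // -cardE.
    by have := olt x; rewrite -Hml (nth_map (g p0)) ?slabs.
  by rewrite inE => /andP [_ /eqP].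
have eqpb : forall x y, (pblock G x == pblock G y) = (g (phi x) == g (phi y)).
  move=> x y; rewrite !pbl !gphi nth_uniq ?sL1 //; last by rewrite /L1 enum_uniq.
  by rewrite nth_uniq ?slabs.
exists (map (fun b : {set 'I_n} => phi @: b) B0); split.
- by move: HB0; case: (B0).
- apply/allP => b' /mapP [b bB0 ->]; rewrite card_imset //.
  rewrite (allP HK _ bB0) /=; apply/subsetP => p /imsetP [x _ ->]; exact: phiS.
move=> p p' pS p'S pp'.
have [x Ex] := phi_sur p pS; have [y Ey] := phi_sur p' p'S.
subst p p'.
have xy : x != y by apply: contraNneq pp' => ->.
rewrite count_map -eqpb -Hc //; apply: eq_count => b /=.
by rewrite !mem_imset.
Qed.


Lemma export_gdd (K : pred nat) ty (P : finType) k (g : P -> 'I_k) (B : seq {set P}) :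
  all (fun t => 0 < t) ty -> gddS K [set: P] g B -> perm_eq (fibs [set: P] g) ty ->
  GDD_exists K ty.
Proof.
move=> tyP [HB HK Hc] Hf.
have fpos : forall i, 0 < #|[set p in [set: P] | g p == i]|.
  move=> i; have : all (fun t => 0 < t) (fibs [set: P] g) by rewrite (perm_all _ Hf).
  by move/allP; apply; apply: map_f; rewrite mem_enum.
set Fb := fun i : 'I_k => [set x : 'I_#|P| | g (enum_val x) == i].
have FbE : forall i, Fb i = enum_rank @: [set p in [set: P] | g p == i].
  move=> i; apply/setP => x; rewrite inE; apply/idP/imsetP.
    by move=> H; exists (enum_val x); rewrite ?enum_valK // !inE.
  by case=> p; rewrite !inE => H ->; rewrite enum_rankK.
have cFb : forall i, #|Fb i| = #|[set p in [set: P] | g p == i]|.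
  by move=> i; rewrite FbE card_imset //; exact: enum_rank_inj.
set G := [set Fb i | i : 'I_k].
have [trivG Finj] : trivIset G /\ {in predT &, injective Fb}.
  apply: trivIimset.
    move=> i j _ _ ji; rewrite -setI_eq0; apply/eqP/setP => x; rewrite !inE.
    apply/negbTE/andP => [[/eqP E1 /eqP E2]].
    by rewrite -E1 -E2 eqxx in ji.
  apply/imsetP => [[i _ E]]; have := fpos i; rewrite -cFb -E cards0.
  by [].
have inFb : forall x, x \in Fb (g (enum_val x)) by move=> x; rewrite inE.
have pbE : forall x, pblock G x = Fb (g (enum_val x)).
  by move=> x; apply: def_pblock => //; apply: imset_f.
exists #|P|, G, (map (fun b : {set P} => enum_rank @: b) B); split; first split.
- apply/and3P; split => //; last first.
    apply/imsetP => [[i _ E]]; have := fpos i; rewrite -cFb -E cards0.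
    by [].
  apply/eqP/setP => x; rewrite inE; apply/bigcupP.
  by exists (Fb (g (enum_val x))) => //; apply: imset_f.
- by move: HB; case: (B).
- apply/allP => b' /mapP [b bB ->]; rewrite card_imset; last exact: enum_rank_inj.
  by case/andP: (allP HK _ bB).
- move=> x y xy; rewrite !pbE.
  have -> : (Fb (g (enum_val x)) != Fb (g (enum_val y))) = (g (enum_val x) != g (enum_val y)).
    by rewrite (inj_in_eq Finj).
  rewrite -Hc ?inE //; last by apply: contraNneq xy => /enum_val_inj ->.
  rewrite count_map; apply: eq_count => b /=.
  by rewrite -{1}(enum_valK x) -{1}(enum_valK y) !mem_imset //; exact: enum_rank_inj.
apply: perm_trans Hf.
have -> : fibs [set: P] g = [seq #|A| | A : {set 'I_#|P|} <- map Fb (enum 'I_k)].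
  by rewrite -map_comp; apply: eq_map => i /=; rewrite cFb.
apply: perm_map; apply: uniq_perm.
- exact: enum_uniq.
- rewrite map_inj_in_uniq ?enum_uniq //; move=> i j _ _; exact: Finj.
move=> A; rewrite mem_enum; apply/imsetP/mapP => [[i _ ->]|[i _ ->]]; exists i => //.
by rewrite mem_enum.
Qed.


Lemma weights (P : pred nat) a b : P b -> a <= b -> b = a %[mod 3] ->
  (forall v, a <= v <= b -> v = a %[mod 3] -> P v) ->
  forall q m, q * a <= m -> m <= q * b -> m = q * a %[mod 3] ->
  exists s, [/\ size s = q, all P s & sumn s = m].
Proof.
move=> Pb ab Hb HP; elim=> [|q IH] m H1 H2 H3.
  by exists [::]; split => //; move: H2; rewrite mul0n leqn0 => /eqP.
set qa := q * a in IH H1 H2 H3 *.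
have E1 : q.+1 * a = qa + a by rewrite mulSn addnC.
have E2 : q.+1 * b = q * b + b by rewrite mulSn addnC.
rewrite E1 in H1 H3; rewrite E2 in H2.
have qab : qa <= q * b by rewrite /qa leq_mul2l ab orbT.
case: (leqP (m - qa) b) => Hv.
  have [s [s1 s2 s3]] := IH qa (leqnn _) qab erefl.
  exists ((m - qa) :: s); split => /=; [by rewrite s1 | | by rewrite s3; lia].
  apply/andP; split => //; apply: HP; first lia.
  have Em : m = qa + (m - qa) by lia.
  move: H3; rewrite {1}Em; move/eqP; rewrite eqn_modDl; move/eqP.
  done.
have L1 : qa <= m - b by lia.
have L2 : m - b <= q * b by lia.
have L3 : m - b = qa %[mod 3].
  have Em : m = (m - b) + b by lia.
  move: H3; rewrite {1}Em; move/eqP; rewrite -modnDmr Hb modnDmr eqn_modDr; move/eqP.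
  done.
have [s [s1 s2 s3]] := IH (m - b) L1 L2 L3.
exists (b :: s); split => /=; [by rewrite s1 | | by rewrite s3; lia].
by apply/andP; split.
Qed.


Lemma map_cst (T : Type) (e : nat) (s : seq T) : [seq e | _ <- s] = nseq (size s) e.
Proof. by elim: s => //= x s ->. Qed.

Lemma type_perm u (d e : nat) :
  perm_eq [seq (if i == ord0 then d else e) | i <- enum 'I_u.+1] (rcons (nseq u e) d).
Proof.
rewrite perm_sym perm_rcons enum_ordSl /= perm_cons -map_comp perm_sym.
have -> : [seq ((fun i : 'I_u.+1 => if i == ord0 then d else e) \o lift ord0) i | i <- enum 'I_u]
   = [seq e | i <- enum 'I_u].
  by apply: eq_map => j /=.
by rewrite map_cst size_enum_ord.
Qed.

Lemma card_fst (X Y : finType) (i : X) :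
  #|[set p in [set: (X * Y)%type] | p.1 == i]| = #|Y|.
Proof.
have -> : [set p in [set: (X * Y)%type] | p.1 == i] = setX [set i] [set: Y].
  by apply/setP => -[a b]; rewrite !inE andbT.
by rewrite cardsX cards1 cardsT mul1n.
Qed.

Lemma wilson u q h (s : seq nat) (Pd : pred nat) :
  size s = q -> all Pd s -> 0 < h -> 0 < q -> 0 < sumn s ->
  GDD_exists (pred1 u.+1) (nseq u.+1 q) ->
  (forall d, Pd d -> GDD_exists (pred1 4) (rcons (nseq u h) d)) ->
  GDD_exists (pred1 4) (rcons (nseq u (h * q)) (sumn s)).
Proof.
move=> ss sP hP qP mP HTD Hing.
set P0 := ('I_u.+1 * 'I_q)%type.
have [BT [HBT HKT HcT]] : exists BT, gddS (pred1 u.+1) [set: P0] (fun x : P0 => x.1) BT.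
  apply: (relabel _ HTD) => //.
  rewrite /fibs.
  have -> : [seq #|[set p in [set: P0] | p.1 == i]| | i <- enum 'I_u.+1] = nseq u.+1 q.
    by rewrite (eq_map (fun i => card_fst _ i)) card_ord map_cst size_enum_ord.
  by [].
have trans : forall b, b \in BT -> forall i : 'I_u.+1, exists x : P0,
    forall y, (y \in b) && (y.1 == i) = (y == x).
  move=> b bT i.
  have fi : {in b &, injective (fun x : P0 => x.1)}.
    move=> y z yb zb E; apply/eqP; apply/negPn/negP => yz.
    have := HcT y z (in_setT _) (in_setT _) yz; rewrite E eqxx /=.
    move=> H; have : 0 < count (fun b0 : {set P0} => (y \in b0) && (z \in b0)) BT.
      by rewrite -has_count; apply/hasP; exists b => //; rewrite yb zb.
    by rewrite H.
  have cb : #|b| = u.+1 by move: (allP HKT _ bT) => /andP [/eqP ->].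
  have : [set x.1 | x in b] = [set: 'I_u.+1].
    apply/eqP; rewrite eqEcard subsetT cardsT card_ord card_in_imset // cb.
    by rewrite /= ltnSn.
  move/setP/(_ i); rewrite !inE => /imsetP [x xb Ex].
  exists x => y; apply/idP/idP.
    by case/andP => yb /eqP yi; apply/eqP; apply: fi => //; rewrite yi.
  by move/eqP ->; rewrite xb Ex eqxx.
set w := fun x : P0 => if x.1 == ord0 then nth 0 s x.2 else h.
set P := ({x : P0 & 'I_(w x)}).
set gb := fun p : P => (tag p).1.
have Hb : forall b : {set P0}, exists Bb : seq {set P},
    b \in BT -> gddS (pred1 4) [set p : P | tag p \in b] gb Bb.
  move=> b; case: (boolP (b \in BT)) => bT; last by exists [::].
  have [x0 Hx0] := trans b bT ord0.
  have d0P : Pd (w x0).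
    have x0b : x0 \in b by have := Hx0 x0; rewrite eqxx => /andP [].
    have x01 : x0.1 == ord0 by have := Hx0 x0; rewrite eqxx => /andP [].
    rewrite /w x01; apply: (allP sP); apply: mem_nth; rewrite ss; exact: ltn_ord.
  have [Bb HBb] : exists Bb, gddS (pred1 4) [set p : P | tag p \in b] gb Bb.
    apply: (@relabel (pred1 4) (rcons (nseq u h) (w x0)) erefl (Hing _ d0P)).
    apply: perm_trans (type_perm u (w x0) h).
    suff -> : fibs [set p : P | tag p \in b] gb = [seq (if i == ord0 then w x0 else h) | i <- enum 'I_u.+1] by [].
    apply: eq_map => i.
    have [xi Hxi] := trans b bT i.
    have -> : [set p in [set p0 : P | tag p0 \in b] | gb p == i] =
              [set p : P | (fun x : P0 => (x \in b) && (x.1 == i)) (tag p)].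
      by apply/setP => p; rewrite !inE.
    rewrite (@card_sigT _ w (fun x : P0 => (x \in b) && (x.1 == i))).
    rewrite (eq_bigl (pred1 xi)) ?big_pred1_eq //.
    have /andP [xib /eqP xi1] : (xi \in b) && (xi.1 == i) by rewrite Hxi.
    case: eqP => [i0|i0].
      by have /eqP -> : xi == x0 by rewrite -Hx0 xib xi1 i0 eqxx.
    by rewrite /w xi1; case: eqP.
  by exists Bb.
pose Bf := fun b => proj1_sig (constructive_indefinite_description _ (Hb b)).
have HBf : forall b, b \in BT -> gddS (pred1 4) [set p : P | tag p \in b] gb (Bf b).
  by move=> b; rewrite /Bf; case: constructive_indefinite_description.
apply: (@export_gdd (pred1 4) _ P _ gb (flatten (map Bf BT))).
- rewrite all_rcons mP all_nseq muln_gt0 hP qP; by rewrite orbT.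
- split.
  + move: HBT HBf; case: (BT) => [//|b BT'] _ H /=.
    have [Hne _ _] := H b (mem_head _ _).
    by move: Hne; case: (Bf b).
  + apply/allP => c /flattenP [Bc /mapP [b bT ->] cB].
    have [_ Hall _] := HBf b bT.
    by case/andP: (allP Hall c cB) => -> _; rewrite subsetT.
  + move=> p p' _ _ pp'.
    rewrite count_flatten -map_comp.
    have E : forall b, b \in BT ->
        count (fun c : {set P} => (p \in c) && (p' \in c)) (Bf b) =
        ((tag p \in b) && (tag p' \in b)) * (gb p != gb p').
      move=> b bT; have [_ Hall Hc] := HBf b bT.
      case: (boolP ((tag p \in b) && (tag p' \in b))) => [/andP [pb p'b]|npb].
        by rewrite mul1n Hc ?inE.
      rewrite mul0n; apply/eqP; rewrite -leqn0 leqNgt -has_count; apply/hasPn => c cB.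
      apply/negP => /andP [pc p'c]; move/negP: npb; apply.
      case/andP: (allP Hall c cB) => _ /subsetP sub.
      by have := sub _ pc; have := sub _ p'c; rewrite !inE => -> ->.
    rewrite ((eq_in_map (count (fun c : {set P} => (p \in c) && (p' \in c)) \o Bf)
      (fun b => ((tag p \in b) && (tag p' \in b)) * (gb p != gb p')) BT).1 E).
    case: (boolP (gb p != gb p')) => gp.
      rewrite (eq_map (fun b => muln1 _)) sumn_count (HcT _ _ (in_setT _) (in_setT _)) //.
      by move: gp; rewrite /gb => ->.
      by apply: contraNneq gp => Et; rewrite /gb Et.
    rewrite (eq_map (fun b => muln0 _)) /=.
    by elim: (BT) => //= ? ? ->.
have cf : forall i : 'I_u.+1, #|[set p in [set: P] | gb p == i]| =
    (if i == ord0 then sumn s else h * q).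
  move=> i.
  have -> : [set p in [set: P] | gb p == i] =
            [set p : P | (fun x : P0 => x.1 == i) (tag p)].
    by apply/setP => p; rewrite !inE.
  rewrite (@card_sigT _ w (fun x : P0 => x.1 == i)).
  transitivity (\sum_(a | a == i) \sum_(j : 'I_q | true) w (a, j)).
    rewrite pair_big_dep; apply: eq_big => [[a j]|[a j] _] //=; by rewrite andbT.
  rewrite big_pred1_eq /w /=.
  case: eqP => _.
    by rewrite sumnE (big_nth 0) ss big_mkord.
  by rewrite sum_nat_const card_ord mulnC.
apply: perm_trans (type_perm u (sumn s) (h * q)).
suff -> : fibs [set: P] gb = [seq (if i == ord0 then sumn s else h * q) | i <- enum 'I_u.+1] by [].
exact: eq_map.
Qed.


Unset Implicit Arguments.
Theorem theorem3p3 (h u q : nat) :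
  0 < h -> 0 < u -> 0 < q ->
  (h %% 6 == 2) || (h %% 6 == 4) ->
  u %% 3 = 0 -> 6 <= u -> ~~ (3 %| q) ->
  GDD_exists (pred1 u.+1) (nseq u.+1 q) ->
  (forall d, admissible h u d -> GDD_exists (pred1 4) (rcons (nseq u h) d)) ->
  forall dmin : nat, admissible h u dmin ->
  (forall d, admissible h u d -> dmin <= d) ->
  forall m : nat, m = h * q %[mod 3] -> q * dmin <= m -> 2 * m <= q * h * (u - 1) ->
  GDD_exists (pred1 4) (rcons (nseq u (h * q)) m).
Proof.
move=> hP uP qP h6 u3 u6 _ HTD Hing dmin admin _ m Hm1 Hm2 Hm3.
case/and3P: admin => dmin0 /eqP dminh dmin2.
set e := u - 1.
set c := h %/ 2.
have hc : h = 2 * c by move/orP: h6 => [] /eqP; rewrite /c; lia.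
have e3 : e %% 3 = 2 by rewrite /e; lia.
set dmax := c * e.
have Hd2 : 2 * dmax = h * e by rewrite hc /dmax mulnA.
have Hdmod : dmax = h %[mod 3].
  by rewrite /dmax -modnMmr e3 hc mulnC.
have dmaxP : 0 < dmax by rewrite /dmax muln_gt0; apply/andP; split; lia.
have ab : dmin <= dmax by lia.
have Hqd : q * h * e = 2 * (q * dmax) by rewrite mulnCA Hd2 mulnA.
have mle : m <= q * dmax by move: Hm3; rewrite -/e Hqd; lia.
have mmod : m = q * dmin %[mod 3].
  by rewrite Hm1 mulnC -modnMmr -dminh modnMmr.
have admax : admissible h u dmax.
  apply/and3P; split => //; first by apply/eqP.
  by rewrite -/e Hd2.
have HPv : forall v, dmin <= v <= dmax -> v = dmin %[mod 3] -> admissible h u v.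
  move=> v /andP [v1 v2] vmod; apply/and3P; split.
  - lia.
  - by apply/eqP; rewrite vmod.
  - rewrite -/e -Hd2; lia.
have [s [ss sP sm]] := @weights (admissible h u) dmin dmax admax
   ab (etrans Hdmod (esym dminh)) HPv q m Hm2 mle mmod.
rewrite -sm; apply: (wilson ss sP hP qP _ HTD Hing).
rewrite sm; apply: leq_trans Hm2; rewrite muln_gt0; lia.
Qed.
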